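(* Let $\mathcal{F}$ be a strong regular facets-pairing structure on $\mathcal{C}^n$ and let $e\subset f$ be proper faces of $\mathcal{C}^n$ with $\dim f-\dim e=1$. Then either $|\widehat e|=|\widehat f|$ or $|\widehat e|=2|\widehat f|$, where $|\widehat g|$ denotes the number of faces in the face family $\widehat g$.
   Context: Let $[\pm n]=\{\pm1,\dots,\pm n\}$ and $\mathcal{C}^n=\{x\in\mathbb{R}^n: -\tfrac14\le x_i\le\tfrac14\}$. For $1\le i\le n$, $\mathbf{F}(i)$ and $\mathbf{F}(-i)$ denote the facets of $\mathcal{C}^n$ in $\{x_i=\tfrac14\}$ and $\{x_i=-\tfrac14\}$; for $j_1,\dots,j_s\in[\pm n]$ with distinct absolute values, $\mathbf{F}(j_1,\dots,j_s)=\bigcap_i\mathbf{F}(j_i)$ (every proper face has this form). A signed permutation is a bijection $\sigma$ of $[\pm n]$ with $\sigma(-k)=-\sigma(k)$. A facets-pairing structure on $\mathcal{C}^n$ is a pair $(\omega,\{\tau_j\})$ where $\omega$ is a bijection of $[\pm n]$ with $\omega\circ\omega=\mathrm{id}$ and $\tau_j:\mathbf{F}(j)\to\mathbf{F}(\omega(j))$ are face-preserving homeomorphisms with $\tau_{\omega(j)}=\tau_j^{-1}$, such that for all $|j|\ne|k|$, writing $\tau_j(\mathbf{F}(j,k))=\mathbf{F}(\omega(j),k')$ and $\tau_k(\mathbf{F}(j,k))=\mathbf{F}(j',\omega(k))$, one has $\tau_{k'}\tau_j(p)=\tau_{j'}\tau_k(p)$ for all $p\in\mathbf{F}(j,k)$.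 It is regular if each $\tau_j$ is a Euclidean isometry and $\omega$ is a signed permutation. A composition $\tau_{k_m}\circ\dots\circ\tau_{k_1}$ applied to a proper face $f$ is valid if $f\subset\mathbf{F}(k_1)$ and $\tau_{k_i}\circ\dots\circ\tau_{k_1}(f)\subset\mathbf{F}(k_{i+1})$ for $1\le i<m$ ($m=0$ allowed). The face family $\widehat f$ is the set of faces $\tau_{k_m}\circ\dots\circ\tau_{k_1}(f)$ over all valid compositions. For a proper face $f$ let $\Xi(f)$ be the set of facets containing $f$. If $f\subset\mathbf{F}(k)$ and $f'=\tau_k(f)$, define $\Psi^f_k:\Xi(f)\to\Xi(f')$ by $\Psi^f_k(\mathbf{F}(k))=\mathbf{F}(\omega(k))$ and, for $F'\in\Xi(f)\setminus\{\mathbf{F}(k)\}$, $\Psi^f_k(F')$ is the facet $G$ with $G\cap\mathbf{F}(\omega(k))=\tau_k(F'\cap\mathbf{F}(k))$. $\mathcal{F}$ is strong if for every proper face $f$ and any two valid compositions mapping $f$ onto the same face $\widetilde f$: (a) they agree at every point of $f$; and (b) the corresponding composites of the maps $\Psi$ along the two compositions coincide as maps $\Xi(f)\to\Xi(\widetilde f)$. *)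

(* Defs.v *)
From Stdlib Require Import Reals ClassicalEpsilon.
From mathcomp Require Import all_boot.
Set Implicit Arguments. Unset Strict Implicit. Unset Printing Implicit Defensive.
Local Open Scope R_scope.

Definition point (n : nat) := 'I_n -> R.
Definition pset (n : nat) := point n -> Prop.

(* Signed indices [±n]: (i, true) stands for +(i+1), (i, false) for -(i+1). *)
Definition signed (n : nat) := ('I_n * bool)%type.
Definition sneg n (j : signed n) : signed n := (j.1, ~~ j.2).

(* A face label: for each coordinate, None = free, Some true = fixed at 1/4,
   Some false = fixed at -1/4.  The label with fixed coordinates j_1..j_s
   encodes F(j_1,...,j_s); proper_face faces are those with at least one fixed
   coordinate. *)
Definition label (n : nat) := {ffun 'I_n -> option bool}.
Definition bnd (b : bool) : R := if b then (Rinv 4) else (- Rinv 4).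

Definition cube n (x : point n) : Prop := forall i, (- Rinv 4 <= x i <= Rinv 4).
Definition face_set n (l : label n) : pset n :=
  fun x => cube x /\ forall i b, l i = Some b -> x i = bnd b.
Definition proper_face n (l : label n) : bool := [exists i, l i != None].
Definition fdim n (l : label n) : nat := #|[pred i | l i == None]|.

Definition facet_label n (j : signed n) : label n :=
  [ffun i => if i == j.1 then Some j.2 else None].
Definition facet n (j : signed n) : pset n := face_set (facet_label j).
Definition F2 n (j k : signed n) : pset n := fun x => facet j x /\ facet k x.

Definition psub n (A B : pset n) : Prop := forall x, A x -> B x.
Definition seteq n (A B : pset n) : Prop := forall x, A x <-> B x.
Definition img n (t : point n -> point n) (A : pset n) : pset n :=
  fun y => exists x, A x /\ y = t x.
Definition is_face n (A : pset n) : Prop :=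
  exists l : label n, proper_face l /\ seteq A (face_set l).

Definition dist2 n (x y : point n) : R :=
  \big[Rplus/0]_(i < n) ((x i - y i) * (x i - y i)).

(* Facets-pairing structure (omega, {tau_j}); tau_j is given as a total map,
   only its restriction to F(j) matters. *)
Definition is_fps n (om : signed n -> signed n)
    (tau : signed n -> point n -> point n) : Prop :=
  (forall j, om (om j) = j) /\
  (forall j, psub (img (tau j) (facet j)) (facet (om j))) /\
  (forall j, psub (facet (om j)) (img (tau j) (facet j))) /\
  (forall j x y, facet j x -> facet j y -> tau j x = tau j y -> x = y) /\
  (forall j (l : label n), proper_face l -> psub (face_set l) (facet j) ->
      is_face (img (tau j) (face_set l))) /\
  (forall j x, facet j x -> tau (om j) (tau j x) = x) /\
  (forall j k k' j', j.1 != k.1 ->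
      seteq (img (tau j) (F2 j k)) (F2 (om j) k') ->
      seteq (img (tau k) (F2 j k)) (F2 j' (om k)) ->
      forall p, F2 j k p -> tau k' (tau j p) = tau j' (tau k p)).

Definition signed_perm n (om : signed n -> signed n) : Prop :=
  bijective om /\ forall j, om (sneg j) = sneg (om j).

Definition regular n (om : signed n -> signed n)
    (tau : signed n -> point n -> point n) : Prop :=
  [/\ is_fps om tau, signed_perm om &
      forall j x y, facet j x -> facet j y ->
        dist2 (tau j x) (tau j y) = dist2 x y].

(* Valid compositions tau_{k_m} o ... o tau_{k_1} applied to a set S,
   ks = [:: k_1; ...; k_m]. *)
Fixpoint valid n (tau : signed n -> point n -> point n) (S : pset n)
    (ks : seq (signed n)) : Prop :=
  match ks with
  | [::] => True
  | k :: ks' => psub S (facet k) /\ valid tau (img (tau k) S) ks'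
  end.

Fixpoint tcomp n (tau : signed n -> point n -> point n)
    (ks : seq (signed n)) (x : point n) : point n :=
  match ks with
  | [::] => x
  | k :: ks' => tcomp tau ks' (tau k x)
  end.

Definition in_family n (tau : signed n -> point n -> point n) (f g : label n)
  : Prop :=
  exists ks, valid tau (face_set f) ks /\
             seteq (img (tcomp tau ks) (face_set f)) (face_set g).

Definition asbool (P : Prop) : bool :=
  if excluded_middle_informative P then true else false.

Definition face_family n (tau : signed n -> point n -> point n) (f : label n)
  : {set label n} := [set g | asbool (in_family tau f g)].

(* Psi_k (facets identified with signed indices): psi_rel k a b means
   Psi_k(F(a)) = F(b). *)
Definition psi_rel n (om : signed n -> signed n)
    (tau : signed n -> point n -> point n) (k a b : signed n) : Prop :=
  (a = k /\ b = om k) \/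
  (a <> k /\ seteq (F2 b (om k)) (img (tau k) (F2 a k))).

Fixpoint psi_chain n (om : signed n -> signed n)
    (tau : signed n -> point n -> point n) (ks : seq (signed n))
    (a b : signed n) : Prop :=
  match ks with
  | [::] => a = b
  | k :: ks' => exists c, psi_rel om tau k a c /\ psi_chain om tau ks' c b
  end.

Definition strong n (om : signed n -> signed n)
    (tau : signed n -> point n -> point n) : Prop :=
  forall (f g : label n) (ks1 ks2 : seq (signed n)),
    proper_face f ->
    valid tau (face_set f) ks1 -> valid tau (face_set f) ks2 ->
    seteq (img (tcomp tau ks1) (face_set f)) (face_set g) ->
    seteq (img (tcomp tau ks2) (face_set f)) (face_set g) ->
    (forall p, face_set f p -> tcomp tau ks1 p = tcomp tau ks2 p) /\
    (forall a b1 b2, psub (face_set f) (facet a) ->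
       psi_chain om tau ks1 a b1 -> psi_chain om tau ks2 a b2 -> b1 = b2).

(* Main.v *)
Require Import Defs.
From Stdlib Require Import Reals ClassicalEpsilon Lra.
From mathcomp Require Import all_boot.
Set Implicit Arguments. Unset Strict Implicit. Unset Printing Implicit Defensive.

Section Geo.
Variable n : nat.
Implicit Types (l : label n) (a c k : signed n).

Lemma bnd_inj (b b' : bool) : bnd b = bnd b' -> b = b'.
Proof. case: b; case: b' => //= H; lra. Qed.
Lemma bnd_neq0 (b : bool) : bnd b <> R0.
Proof. case: b => /= H; lra. Qed.

Definition pt l : point n := fun i => match l i with Some b => bnd b | None => R0 end.
Lemma pt_face l : face_set l (pt l).
Proof.
split.
- move=> i; rewrite /pt; case: (l i) => [[]|] /=; lra.
- by move=> i b H; rewrite /pt H.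
Qed.

Lemma seteq_psub (A B : pset n) : seteq A B -> psub A B.
Proof. by move=> H x /H. Qed.
Lemma seteq_psubr (A B : pset n) : seteq A B -> psub B A.
Proof. by move=> H x /H. Qed.
Lemma seteq_sym (A B : pset n) : seteq A B -> seteq B A.
Proof. by move=> H x; split => /H. Qed.
Lemma seteq_trans (A B C : pset n) : seteq A B -> seteq B C -> seteq A C.
Proof. by move=> H1 H2 x; split => [/H1/H2|/H2/H1]. Qed.
Lemma seteq_refl (A : pset n) : seteq A A.
Proof. by []. Qed.
Lemma psub_trans (A B C : pset n) : psub A B -> psub B C -> psub A C.
Proof. by move=> H1 H2 x /H1/H2. Qed.
Lemma psub_seteq (A B : pset n) : psub A B -> psub B A -> seteq A B.
Proof. by move=> H1 H2 x; split => [/H1|/H2]. Qed.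

Lemma face_sub l l' : psub (face_set l) (face_set l') ->
  forall i b, l' i = Some b -> l i = Some b.
Proof.
move=> Hs i b Hb; have [_ H'] := Hs _ (pt_face l).
have := H' i b Hb; rewrite /pt; case: (l i) => [b'|] H.
- by rewrite (bnd_inj H).
- by have := @bnd_neq0 b; rewrite -H.
Qed.

Lemma face_sub' l l' : (forall i b, l' i = Some b -> l i = Some b) ->
  psub (face_set l) (face_set l').
Proof. move=> H x [Hc Hx]; split => // i b Hb; exact: Hx _ _ (H _ _ Hb). Qed.

Lemma face_eq l l' : seteq (face_set l) (face_set l') -> l = l'.
Proof.
move=> Hs; apply/ffunP => i.
have H1 := face_sub (seteq_psub Hs); have H2 := face_sub (seteq_psubr Hs).
case El: (l i) => [b|]; case El': (l' i) => [b'|] //.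
- by rewrite (H1 _ _ El') in El.
- by rewrite (H2 _ _ El) in El'.
- by rewrite (H1 _ _ El') in El.
Qed.

Definition Xi l a := l a.1 = Some a.2.

Lemma facet_labelE a i : facet_label a i = if i == a.1 then Some a.2 else None.
Proof. by rewrite ffunE. Qed.

Lemma in_facet l a : psub (face_set l) (facet a) <-> Xi l a.
Proof.
split.
- by move=> H; apply: (face_sub H); rewrite facet_labelE eqxx.
- move=> H; apply: face_sub' => i b; rewrite facet_labelE.
  by case: eqP => // -> [<-].
Qed.

Lemma Xi_proper l a : Xi l a -> proper_face l.
Proof. by move=> H; apply/existsP; exists a.1; rewrite H. Qed.

Lemma Xi_eq l a a' : Xi l a -> Xi l a' -> a.1 = a'.1 -> a = a'.
Proof.
case: a => i b; case: a' => i' b'; rewrite /Xi /= => H1 H2 E; subst i'.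
by rewrite H1 in H2; case: H2 => ->.
Qed.

Definition lab2 a k : label n :=
  [ffun i => if i == a.1 then Some a.2 else if i == k.1 then Some k.2 else None].

Lemma F2_lab a k : a.1 != k.1 \/ a = k -> seteq (F2 a k) (face_set (lab2 a k)).
Proof.
move=> Hak x; split.
- move=> [[Hc Ha] [_ Hk]]; split => // i b; rewrite ffunE.
  case: eqP => [->|_] .
  + by move=> [<-]; apply: Ha; rewrite facet_labelE eqxx.
  + case: eqP => // -> [<-]; apply: Hk; by rewrite facet_labelE eqxx.
- move=> [Hc H]; split; split => // i b; rewrite facet_labelE;
    case: eqP => // -> [<-]; apply: H; rewrite ffunE ?eqxx //.
  case: Hak => [|->]; last by rewrite eqxx.
  by rewrite eq_sym => /negPf ->.
Qed.

Lemma F2_ne a k x : F2 a k x -> a.1 != k.1 \/ a = k.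
Proof.
case: (eqVneq a.1 k.1) => [E|]; last by left.
move=> [[_ Ha] [_ Hk]]; right.
have := Ha a.1 a.2; rewrite facet_labelE eqxx => /(_ erefl) Ha'.
have := Hk k.1 k.2; rewrite facet_labelE eqxx => /(_ erefl) Hk'.
rewrite E Hk' in Ha'; have E2 := bnd_inj Ha'.
by move: E E2; case: (a) => ? ?; case: (k) => ? ? /= -> ->.
Qed.

Lemma lab2_inj c c' w : (c.1 != w.1 \/ c = w) -> (c'.1 != w.1 \/ c' = w) ->
  lab2 c w = lab2 c' w -> c = c'.
Proof.
move=> H1 H2 E.
have E1 := congr1 (fun l => l c.1) E; have E2 := congr1 (fun l => l c'.1) E.
move: E1 E2 => /=; rewrite !ffunE !eqxx; clear E.
case: c H1 => i b; case: c' H2 => i' b'; case: w => j v /= H2 H1.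
case: (eqVneq i i') => [<-|ii'].
- by move=> [->].
- case: (eqVneq i j) => [ij|ij]; case: (eqVneq i' j) => [i'j|i'j] //.
  by rewrite ij i'j eqxx in ii'.
Qed.

Lemma F2C a k : seteq (F2 a k) (F2 k a).
Proof. by move=> x; split => [[]|[]]. Qed.

End Geo.

Section Tau.
Variable n : nat.
Variables (om : signed n -> signed n) (tau : signed n -> point n -> point n).
Hypothesis Hfps : is_fps om tau.
Implicit Types (l : label n) (a c k : signed n) (A B : pset n).

Lemma om_inv j : om (om j) = j.
Proof. by case: Hfps. Qed.
Lemma tau_into j x : facet j x -> facet (om j) (tau j x).
Proof. by move=> Hx; case: Hfps => _ [H _]; apply: H; exists x. Qed.
Lemma tau_onto j y : facet (om j) y -> exists x, facet j x /\ y = tau j x.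
Proof. by move=> Hy; case: Hfps => _ [_ [H _]]; apply: H. Qed.
Lemma tau_inj j x y : facet j x -> facet j y -> tau j x = tau j y -> x = y.
Proof. by case: Hfps => _ [_ [_ [H _]]]; apply: H. Qed.
Lemma tau_face j l : proper_face l -> psub (face_set l) (facet j) ->
  is_face (img (tau j) (face_set l)).
Proof. by case: Hfps => _ [_ [_ [_ [H _]]]]; apply: H. Qed.
Lemma tau_inv j x : facet j x -> tau (om j) (tau j x) = x.
Proof. by case: Hfps => _ [_ [_ [_ [_ [H _]]]]]; apply: H. Qed.
Lemma tau_inv' j y : facet (om j) y -> tau j (tau (om j) y) = y.
Proof. by move=> H; have := tau_inv H; rewrite om_inv. Qed.
Lemma tau_cycle j k k' j' : j.1 != k.1 ->
      seteq (img (tau j) (F2 j k)) (F2 (om j) k') ->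
      seteq (img (tau k) (F2 j k)) (F2 j' (om k)) ->
      forall p, F2 j k p -> tau k' (tau j p) = tau j' (tau k p).
Proof. by case: Hfps => _ [_ [_ [_ [_ [_ H]]]]]; apply: H. Qed.

Lemma img_psub (t : point n -> point n) A B : psub A B -> psub (img t A) (img t B).
Proof. by move=> H y [x [Hx ->]]; exists x; split => //; apply: H. Qed.
Lemma img_seteq (t : point n -> point n) A B : seteq A B -> seteq (img t A) (img t B).
Proof.
by move=> H; apply: psub_seteq; apply: img_psub; [apply: seteq_psub|apply: seteq_psubr].
Qed.
Lemma img_ext (t t' : point n -> point n) A : (forall x, A x -> t x = t' x) ->
  seteq (img t A) (img t' A).
Proof.
by move=> H y; split => -[x [Hx ->]]; exists x; split => //; rewrite H.
Qed.
Lemma img_comp (t t' : point n -> point n) A :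
  seteq (img t' (img t A)) (img (fun x => t' (t x)) A).
Proof.
move=> y; split.
- by move=> [z [[x [Hx ->]] ->]]; exists x.
- by move=> [x [Hx ->]]; exists (t x); split => //; exists x.
Qed.
Lemma img_into j A : psub A (facet j) -> psub (img (tau j) A) (facet (om j)).
Proof. by move=> H y [x [Hx ->]]; apply: tau_into; apply: H. Qed.
Lemma img_inv j A : psub A (facet j) -> seteq (img (tau (om j)) (img (tau j) A)) A.
Proof.
move=> H; apply: seteq_trans (img_comp _ _ _) _.
apply: seteq_trans (img_ext (t' := id) _) _.
- by move=> x Hx; apply: tau_inv; apply: H.
- by move=> y; split => [[x [Hx ->]]|Hy] //; exists y.
Qed.
Lemma img_inv' j A : psub A (facet (om j)) -> seteq (img (tau j) (img (tau (om j)) A)) A.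
Proof. by move=> H; have := img_inv H; rewrite om_inv. Qed.
Lemma img_full j : seteq (img (tau j) (facet j)) (facet (om j)).
Proof.
apply: psub_seteq; first by apply: img_into.
by move=> y /tau_onto [x [Hx ->]]; exists x.
Qed.
Lemma img_cancel j A B : psub A (facet j) -> psub B (facet j) ->
  seteq (img (tau j) A) (img (tau j) B) -> seteq A B.
Proof.
move=> HA HB H.
apply: seteq_trans (seteq_sym (img_inv HA)) _.
apply: seteq_trans (img_inv HB).
exact: img_seteq.
Qed.

Definition timg k l : label n :=
  match excluded_middle_informative
          (exists l', seteq (img (tau k) (face_set l)) (face_set l')) with
  | left H => proj1_sig (constructive_indefinite_description _ H)
  | right _ => l
  end.

Lemma timg_spec k l : Xi l k -> seteq (img (tau k) (face_set l)) (face_set (timg k l)).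
Proof.
move=> Hx; rewrite /timg; case: excluded_middle_informative => [H|H].
- by case: constructive_indefinite_description.
- exfalso; apply: H.
  have [l' [_ Hl']] := tau_face (Xi_proper Hx) (proj2 (in_facet _ _) Hx).
  by exists l'.
Qed.

Lemma Xi_timg k l : Xi l k -> Xi (timg k l) (om k).
Proof.
move=> Hx; apply/in_facet; apply: psub_trans (seteq_psubr (timg_spec Hx)) _.
by apply: img_into; apply/in_facet.
Qed.

Lemma timg_inv k l : Xi l k -> timg (om k) (timg k l) = l.
Proof.
move=> Hx; apply: face_eq.
apply: seteq_trans (seteq_sym (timg_spec (Xi_timg Hx))) _.
apply: seteq_trans (img_seteq _ (seteq_sym (timg_spec Hx))) _.
by apply: img_inv; apply/in_facet.
Qed.

Lemma timg_mono k l1 l2 : Xi l1 k -> Xi l2 k -> psub (face_set l1) (face_set l2) ->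
  psub (face_set (timg k l1)) (face_set (timg k l2)).
Proof.
move=> H1 H2 H.
apply: psub_trans (seteq_psubr (timg_spec H1)) _.
apply: psub_trans (seteq_psub (timg_spec H2)).
exact: img_psub.
Qed.

Lemma pt_not_facet a k : a.1 != k.1 -> ~ facet a (pt (facet_label k)).
Proof.
move=> Hak [_ H]; have := H a.1 a.2; rewrite facet_labelE eqxx => /(_ erefl).
rewrite /pt facet_labelE (negPf Hak) => E; by apply: (@bnd_neq0 a.2).
Qed.

Lemma facet_pt k : facet k (pt (facet_label k)).
Proof. exact: pt_face. Qed.

End Tau.

Section Psi.
Variable n : nat.
Variables (om : signed n -> signed n) (tau : signed n -> point n -> point n).
Hypothesis Hfps : is_fps om tau.
Implicit Types (l : label n) (a c k : signed n) (A B : pset n).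
Local Notation timg := (timg tau).
Local Notation prel := (psi_rel om tau).

Lemma Xi_lab2a a k : Xi (lab2 a k) a.
Proof. by rewrite /Xi ffunE eqxx. Qed.
Lemma Xi_lab2k a k : a.1 != k.1 -> Xi (lab2 a k) k.
Proof. by move=> H; rewrite /Xi ffunE eq_sym (negPf H) eqxx. Qed.

Lemma F2_sub l a k : Xi l a -> Xi l k -> psub (face_set l) (F2 a k).
Proof. by move=> /in_facet Ha /in_facet Hk x Hx; split; [apply: Ha|apply: Hk]. Qed.

Lemma Xi_ne l a k : Xi l a -> Xi l k -> a <> k -> a.1 != k.1.
Proof. by move=> Ha Hk ne; apply/eqP => E; apply: ne; apply: Xi_eq Ha Hk E. Qed.

Lemma psi_core k a : a.1 != k.1 ->
  exists c, c.1 != (om k).1 /\ seteq (F2 c (om k)) (img (tau k) (F2 a k)).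
Proof.
move=> Hak.
pose A := lab2 a k.
have FA : seteq (F2 a k) (face_set A) := F2_lab (or_introl Hak).
have XAk : Xi A k by apply: Xi_lab2k.
have XAa : Xi A a by apply: Xi_lab2a.
pose L := timg k A.
have HL : seteq (img (tau k) (face_set A)) (face_set L) := timg_spec Hfps XAk.
have XL : Xi L (om k) := Xi_timg Hfps XAk.
have sAk : psub (face_set A) (facet k) by apply/in_facet.
have [/existsP [i /andP [Hi HLi]] | Hno] := boolP [exists i, (i != (om k).1) && (L i != None)];
  last first.
  exfalso.
  have sub : psub (facet (om k)) (face_set L).
    apply: face_sub' => i b Hb; rewrite facet_labelE.
    case: (eqVneq i (om k).1) => [E|ne].
    - by move: Hb; rewrite E XL.
    - move/existsP: Hno; case; exists i; by rewrite ne Hb.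
  have p1 := facet_pt k.
  have := sub _ (tau_into Hfps p1) => /(seteq_psubr HL) [x [Hx Ex]].
  have Hx' := seteq_psubr FA Hx.
  have := tau_inj Hfps p1 (proj2 Hx') Ex => Ep.
  by apply: (pt_not_facet Hak); rewrite Ep; case: Hx'.
move: HLi; case EL: (L i) => [v|] // _.
pose b := (i, v).
have Hbk : b.1 != (om k).1 := Hi.
pose B := lab2 b (om k).
have FB : seteq (F2 b (om k)) (face_set B) := F2_lab (or_introl Hbk).
have XBok : Xi B (om k) by apply: Xi_lab2k.
have LB : psub (face_set L) (face_set B).
  apply: face_sub' => i' w; rewrite ffunE.
  case: eqP => [->|_]; first by move=> [<-].
  by case: eqP => // -> [<-].
pose M := timg (om k) B.
have HM : seteq (img (tau (om k)) (face_set B)) (face_set M) := timg_spec Hfps XBok.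
have XMk : Xi M k by have := Xi_timg Hfps XBok; rewrite /M (om_inv Hfps).
have sBok : psub (face_set B) (facet (om k)) by apply/in_facet.
have AM : psub (face_set A) (face_set M).
  apply: psub_trans (seteq_psubr (img_inv Hfps sAk)) _.
  apply: (psub_trans _ (seteq_psub HM)).
  apply: img_psub; apply: psub_trans (seteq_psub HL) _; exact: LB.
have [/existsP [j /andP [Hj HMj]] | Hno2] := boolP [exists j, (j != k.1) && (M j != None)];
  last first.
  exfalso.
  have sub : psub (facet k) (face_set M).
    apply: face_sub' => j b' Hb; rewrite facet_labelE.
    case: (eqVneq j k.1) => [E|ne].
    - by move: Hb; rewrite E XMk.
    - move/existsP: Hno2; case; exists j; by rewrite ne Hb.
  have subB : psub (facet (om k)) (face_set B).
    apply: psub_trans (seteq_psubr (img_full Hfps k)) _.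
    apply: psub_trans (img_psub sub) _.
    apply: psub_trans (img_psub (seteq_psubr HM)) _.
    exact: seteq_psub (img_inv' Hfps sBok).
  have := subB _ (facet_pt (om k)) => -[_ H].
  have := H b.1 b.2; rewrite /B ffunE eqxx => /(_ erefl).
  rewrite /pt facet_labelE (negPf Hbk) => E; by apply: (@bnd_neq0 b.2).
move: HMj; case EM: (M j) => [w|] // _.
have := face_sub AM EM; rewrite /A ffunE (negPf Hj).
case: eqP => // Eja [Ew].
have XMa : Xi M a by rewrite /Xi -Eja EM Ew.
have MA : psub (face_set M) (face_set A).
  apply: face_sub' => i' w'; rewrite ffunE.
  case: eqP => [->|_]; first by move=> [<-].
  by case: eqP => // -> [<-].
exists b; split => //.
apply: seteq_trans FB _.
apply: seteq_trans (seteq_sym (img_inv' Hfps sBok)) _.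
apply: img_seteq.
apply: seteq_trans HM _.
apply: seteq_sym; apply: seteq_trans FA _.
exact: psub_seteq.
Qed.

Lemma psi_exists l k a : Xi l k -> Xi l a -> exists c, prel k a c.
Proof.
move=> Hk Ha; case: (eqVneq a k) => [->|ne].
- by exists (om k); left.
- have [c [_ Hc]] := psi_core (Xi_ne Ha Hk (elimN eqP ne)).
  by exists c; right; split => //; apply/eqP.
Qed.

Lemma psi_Xi l k a c : Xi l k -> Xi l a -> prel k a c -> Xi (timg k l) c.
Proof.
move=> Hk Ha [[_ ->]|[ne H]]; first exact: Xi_timg.
apply/in_facet.
apply: psub_trans (seteq_psubr (timg_spec Hfps Hk)) _.
apply: psub_trans (img_psub (F2_sub Ha Hk)) _.
apply: psub_trans (seteq_psubr H) _.
by move=> x [].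
Qed.

Lemma psi_fun l k a c c' : Xi l k -> Xi l a -> prel k a c -> prel k a c' -> c = c'.
Proof.
move=> Hk Ha [[-> ->]|[ne H]] [[E ->]|[ne' H']] //.
have Hak := Xi_ne Ha Hk ne.
have Hp : F2 a k (pt (lab2 a k)) by apply: (seteq_psubr (F2_lab (or_introl Hak))); apply: pt_face.
have Hy : img (tau k) (F2 a k) (tau k (pt (lab2 a k))) by exists (pt (lab2 a k)).
have Hc := seteq_psubr H Hy; have Hc' := seteq_psubr H' Hy.
have E : seteq (F2 c (om k)) (F2 c' (om k)) by apply: seteq_trans H (seteq_sym H').
apply: (lab2_inj (F2_ne Hc) (F2_ne Hc')); apply: face_eq.
apply: seteq_trans (seteq_sym (F2_lab (F2_ne Hc))) _.
by apply: seteq_trans E (F2_lab (F2_ne Hc')).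
Qed.

Lemma facet_not_img k a' : a'.1 != k.1 ->
  ~ seteq (facet (om k)) (img (tau k) (F2 a' k)).
Proof.
move=> Ha' H.
have p1 := facet_pt k.
have [x [[Hx1 Hx2] Ex]] := seteq_psub H (tau_into Hfps p1).
have := tau_inj Hfps p1 Hx2 Ex => Ep.
by apply: (pt_not_facet Ha'); rewrite Ep.
Qed.

Lemma F2_self k : seteq (F2 k k) (facet k).
Proof. by move=> x; split => [[]|H]. Qed.

Lemma psi_inj l k a a' c : Xi l k -> Xi l a -> Xi l a' ->
  prel k a c -> prel k a' c -> a = a'.
Proof.
move=> Hk Ha Ha' [[-> ->]|[ne H]] [[-> E]|[ne' H']] //.
- exfalso; apply: (facet_not_img (Xi_ne Ha' Hk ne')).
  by apply: seteq_trans (seteq_sym (F2_self _)) H'.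
- exfalso; apply: (facet_not_img (Xi_ne Ha Hk ne)).
  by rewrite E in H; apply: seteq_trans (seteq_sym (F2_self _)) H.
- have Hak := Xi_ne Ha Hk ne; have Ha'k := Xi_ne Ha' Hk ne'.
  have E : seteq (F2 a k) (F2 a' k).
    apply: (img_cancel Hfps (j := k)); try by move=> x [].
    by apply: seteq_trans (seteq_sym H) H'.
  apply: (lab2_inj (or_introl Hak) (or_introl Ha'k)); apply: face_eq.
  apply: seteq_trans (seteq_sym (F2_lab (or_introl Hak))) _.
  by apply: seteq_trans E (F2_lab (or_introl Ha'k)).
Qed.

Lemma psi_surj l k c : Xi l k -> Xi (timg k l) c -> exists a, Xi l a /\ prel k a c.
Proof.
move=> Hk Hc; case: (eqVneq c (om k)) => [->|ne].
  by exists k; split => //; left.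
have Hok := Xi_timg Hfps Hk.
have [a Ha] := psi_exists Hok Hc.
have Xa := psi_Xi Hok Hc Ha; rewrite timg_inv // in Xa.
exists a; split => //.
case: Ha => [[E _]|[_ H]]; first by rewrite E eqxx in ne.
rewrite (om_inv Hfps) in H.
have Hck := Xi_ne Hc Hok (elimN eqP ne).
have sc : psub (F2 c (om k)) (facet (om k)) by move=> x [].
case: (eqVneq a k) => [Eak|nak].
- exfalso; subst a.
  apply: (facet_not_img (a' := c) (k := om k)); first by [].
  rewrite (om_inv Hfps).
  exact: seteq_trans (seteq_sym (F2_self k)) H.
- right; split; first exact/eqP.
  apply: seteq_trans (seteq_sym (img_inv' Hfps sc)) _.
  exact: img_seteq (seteq_sym H).
Qed.

End Psi.

Section Chain.
Variable n : nat.
Variables (om : signed n -> signed n) (tau : signed n -> point n -> point n).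
Hypothesis Hfps : is_fps om tau.
Implicit Types (l : label n) (a b c k : signed n) (A B : pset n) (ks : seq (signed n)).
Local Notation timg := (timg tau).
Local Notation prel := (psi_rel om tau).
Local Notation chain := (psi_chain om tau).

Fixpoint limg ks l : label n :=
  match ks with [::] => l | k :: ks' => limg ks' (timg k l) end.
Fixpoint lvalid ks l : Prop :=
  match ks with [::] => True | k :: ks' => Xi l k /\ lvalid ks' (timg k l) end.

Lemma limg_rcons ks k l : limg (rcons ks k) l = timg k (limg ks l).
Proof. by elim: ks l => //= k' ks IH l; rewrite IH. Qed.
Lemma lvalid_rcons ks k l : lvalid (rcons ks k) l <-> lvalid ks l /\ Xi (limg ks l) k.
Proof.
elim: ks l => /= [|k' ks IH] l; first by split => [[]|[]].
rewrite IH; tauto.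
Qed.
Lemma chain_rcons ks k a b : chain (rcons ks k) a b <-> exists c, chain ks a c /\ prel k c b.
Proof.
elim: ks a => /= [|k' ks IH] a.
- split => [[c [H E]]|[c [E H]]]; subst; [by exists a|by exists b].
- split.
  + move=> [c [H1 /IH [d [H2 H3]]]]; exists d; split => //; by exists c.
  + move=> [d [[c [H1 H2]] H3]]; exists c; split => //; apply/IH; by exists d.
Qed.

Lemma chain_ex ks l a : lvalid ks l -> Xi l a -> exists b, chain ks a b /\ Xi (limg ks l) b.
Proof.
elim: ks l a => /= [|k ks IH] l a; first by move=> _ Ha; exists a.
move=> [Hk Hv] Ha.
have [c Hc] := psi_exists Hfps Hk Ha.
have [b [Hb Xb]] := IH _ _ Hv (psi_Xi Hfps Hk Ha Hc).
by exists b; split => //; exists c.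
Qed.

Lemma chain_Xi ks l a b : lvalid ks l -> Xi l a -> chain ks a b -> Xi (limg ks l) b.
Proof.
elim: ks l a => /= [|k ks IH] l a; first by move=> _ Ha <-.
move=> [Hk Hv] Ha [c [Hc Hb]].
exact: IH Hv (psi_Xi Hfps Hk Ha Hc) Hb.
Qed.

Lemma chain_fun ks l a b b' : lvalid ks l -> Xi l a -> chain ks a b -> chain ks a b' -> b = b'.
Proof.
elim: ks l a => /= [|k ks IH] l a; first by move=> _ _ <- <-.
move=> [Hk Hv] Ha [c [Hc Hb]] [c' [Hc' Hb']].
have E := psi_fun Hk Ha Hc Hc'; subst c'.
exact: IH Hv (psi_Xi Hfps Hk Ha Hc) Hb Hb'.
Qed.

Lemma chain_inj ks l a a' b : lvalid ks l -> Xi l a -> Xi l a' ->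
  chain ks a b -> chain ks a' b -> a = a'.
Proof.
elim: ks l a a' => /= [|k ks IH] l a a'; first by move=> _ _ _ -> ->.
move=> [Hk Hv] Ha Ha' [c [Hc Hb]] [c' [Hc' Hb']].
have E := IH _ _ _ Hv (psi_Xi Hfps Hk Ha Hc) (psi_Xi Hfps Hk Ha' Hc') Hb Hb'; subst c'.
exact (psi_inj Hfps Hk Ha Ha' Hc Hc').
Qed.

Lemma chain_surj ks l b : lvalid ks l -> Xi (limg ks l) b -> exists a, Xi l a /\ chain ks a b.
Proof.
elim: ks l b => /= [|k ks IH] l b; first by move=> _ Hb; exists b.
move=> [Hk Hv] Hb.
have [c [Xc Hc]] := IH _ _ Hv Hb.
have [a [Xa Ha]] := psi_surj Hfps Hk Xc.
by exists a; split => //; exists c.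
Qed.

Lemma valid_seteq ks A B : seteq A B -> valid tau A ks -> valid tau B ks.
Proof.
elim: ks A B => //= k ks IH A B H [H1 H2]; split.
- exact: psub_trans (seteq_psubr H) H1.
- exact: IH (img_seteq _ H) H2.
Qed.

Lemma img_tcomp_cons k ks A :
  seteq (img (tcomp tau (k :: ks)) A) (img (tcomp tau ks) (img (tau k) A)).
Proof. exact: seteq_sym (img_comp _ _ _). Qed.

Lemma limg_spec ks l : lvalid ks l ->
  seteq (img (tcomp tau ks) (face_set l)) (face_set (limg ks l)).
Proof.
elim: ks l => /= [|k ks IH] l.
- by move=> _ x; split => [[y [Hy ->]]|Hx] //; exists x.
- move=> [Hk Hv]; apply: seteq_trans (img_tcomp_cons _ _ _) _.
  apply: seteq_trans (img_seteq _ (timg_spec Hfps Hk)) _.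
  exact: IH.
Qed.

Lemma lvalid_valid ks l : lvalid ks l -> valid tau (face_set l) ks.
Proof.
elim: ks l => //= k ks IH l [Hk Hv]; split; first exact/in_facet.
exact: valid_seteq (seteq_sym (timg_spec Hfps Hk)) (IH _ Hv).
Qed.

Lemma valid_lvalid ks l : valid tau (face_set l) ks -> lvalid ks l.
Proof.
elim: ks l => //= k ks IH l [Hk Hv].
have Xk : Xi l k by apply/in_facet.
split => //; apply: IH; exact: valid_seteq (timg_spec Hfps Xk) Hv.
Qed.

Lemma in_familyP l g : in_family tau l g <-> exists ks, lvalid ks l /\ limg ks l = g.
Proof.
split.
- move=> [ks [Hv Hs]]; have Hl := valid_lvalid Hv; exists ks; split => //.
  apply: face_eq; exact: seteq_trans (seteq_sym (limg_spec Hl)) Hs.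
- move=> [ks [Hv <-]]; exists ks; split; first exact: lvalid_valid.
  exact: limg_spec.
Qed.

Lemma lmono ks l1 l2 : psub (face_set l1) (face_set l2) -> lvalid ks l2 ->
  lvalid ks l1 /\ psub (face_set (limg ks l1)) (face_set (limg ks l2)).
Proof.
elim: ks l1 l2 => //= k ks IH l1 l2 H [Hk Hv].
have Hk1 : Xi l1 k by apply/in_facet; apply: psub_trans H _; apply/in_facet.
have [H1 H2] := IH _ _ (timg_mono Hfps Hk1 Hk H) Hv.
by [].
Qed.

Lemma Xi_mono l1 l2 a : psub (face_set l1) (face_set l2) -> Xi l2 a -> Xi l1 a.
Proof. by move=> H /in_facet Ha; apply/in_facet; apply: psub_trans H Ha. Qed.

Hypothesis Hst : strong om tau.

Lemma strongA l ks1 ks2 : proper_face l -> lvalid ks1 l -> lvalid ks2 l ->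
  limg ks1 l = limg ks2 l -> forall p, face_set l p -> tcomp tau ks1 p = tcomp tau ks2 p.
Proof.
move=> Hp H1 H2 E.
have [HA _] := Hst (g := limg ks1 l) Hp (lvalid_valid H1) (lvalid_valid H2)
  (limg_spec H1) (ltac:(rewrite E; exact: limg_spec H2)).
exact: HA.
Qed.

Lemma strongB l ks1 ks2 a b1 b2 : proper_face l -> lvalid ks1 l -> lvalid ks2 l ->
  limg ks1 l = limg ks2 l -> Xi l a -> chain ks1 a b1 -> chain ks2 a b2 -> b1 = b2.
Proof.
move=> Hp H1 H2 E Ha.
have [_ HB] := Hst (g := limg ks1 l) Hp (lvalid_valid H1) (lvalid_valid H2)
  (limg_spec H1) (ltac:(rewrite E; exact: limg_spec H2)).
by apply: HB; apply/in_facet.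
Qed.

End Chain.

Lemma asboolP (P : Prop) : asbool P = true <-> P.
Proof. by rewrite /asbool; case: excluded_middle_informative. Qed.

Lemma card_rel (T : finType) (A B : {set T}) (R : T -> T -> Prop) :
  (forall a, a \in A -> exists b, b \in B /\ R a b) ->
  (forall b, b \in B -> exists a, a \in A /\ R a b) ->
  (forall a b b', a \in A -> b \in B -> b' \in B -> R a b -> R a b' -> b = b') ->
  (forall a a' b, a \in A -> a' \in A -> b \in B -> R a b -> R a' b -> a = a') ->
  #|A| = #|B|.
Proof.
move=> HAB HBA Hfun Hinj.
pose g (a : T) : T :=
  match excluded_middle_informative (exists b, b \in B /\ R a b) with
  | left H => proj1_sig (constructive_indefinite_description _ H)
  | right _ => a end.
have gP : forall a, a \in A -> g a \in B /\ R a (g a).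
  move=> a Ha; rewrite /g; case: excluded_middle_informative => [H|H].
  - by case: constructive_indefinite_description.
  - by exfalso; apply: H; apply: HAB.
have -> : B = g @: A.
  apply/setP => b; apply/idP/imsetP.
  - move=> Hb; have [a [Ha Hab]] := HBA _ Hb; exists a => //.
    have [H1 H2] := gP _ Ha; exact (Hfun a b (g a) Ha Hb H1 Hab H2).
  - by move=> [a Ha ->]; case: (gP _ Ha).
rewrite card_in_imset // => a a' Ha Ha' E.
have [H1 H2] := gP _ Ha; have [H1' H2'] := gP _ Ha'.
rewrite E in H1 H2; exact (Hinj a a' (g a') Ha Ha' H1' H2 H2').
Qed.

Lemma Xi_ext n (l l' : label n) : (forall a, Xi l a -> Xi l' a) ->
  (forall a, Xi l' a -> Xi l a) -> l = l'.
Proof.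
move=> H1 H2; apply: face_eq; apply: psub_seteq; apply: face_sub' => i b Hb.
- exact ((H2 (i, b) Hb)).
- exact ((H1 (i, b) Hb)).
Qed.

Section Main.
Variable n : nat.
Variables (om : signed n -> signed n) (tau : signed n -> point n -> point n).
Hypothesis Hfps : is_fps om tau.
Hypothesis Hst : strong om tau.
Variables (e f : label n) (a0 : signed n).
Hypothesis Hef : psub (face_set e) (face_set f).
Hypothesis Ha0 : Xi e a0.
Hypothesis Hna0 : ~ Xi f a0.
Hypothesis Hsplit : forall a, Xi e a -> a = a0 \/ Xi f a.
Hypothesis Hpf : proper_face f.
Implicit Types (l x y : label n) (a b c k : signed n) (ks : seq (signed n)).
Local Notation timg := (timg tau).
Local Notation limg := (limg tau).
Local Notation lvalid := (lvalid tau).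
Local Notation prel := (psi_rel om tau).
Local Notation chain := (psi_chain om tau).

Lemma Hpe : proper_face e.
Proof. exact (Xi_proper Ha0). Qed.

Definition inC x := exists ks, lvalid ks f /\ limg ks e = x.
Definition inJ x := exists ks c, lvalid ks f /\ chain ks a0 c /\ timg c (limg ks e) = x.

Lemma fe ks : lvalid ks f -> lvalid ks e /\ psub (face_set (limg ks e)) (face_set (limg ks f)).
Proof. move=> H; exact ((lmono Hfps Hef H)). Qed.

Lemma sig_in ks c : lvalid ks f -> chain ks a0 c -> Xi (limg ks e) c.
Proof. move=> /fe [H _] Hc; exact (chain_Xi Hfps H Ha0 Hc). Qed.

Lemma sig_notg ks c : lvalid ks f -> chain ks a0 c -> ~ Xi (limg ks f) c.
Proof.
move=> Hv Hc Hx.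
have [a [Xa Ha]] := chain_surj Hfps Hv Hx.
have [Hve _] := fe Hv.
have E := chain_inj Hfps Hve (Xi_mono Hef Xa) Ha0 Ha Hc.
by apply: Hna0; rewrite -E.
Qed.

Lemma moveN ks c k : lvalid ks f -> chain ks a0 c -> Xi (limg ks e) k -> k <> c ->
  Xi (limg ks f) k.
Proof.
move=> Hv Hc Hk ne.
have [Hve _] := fe Hv.
have [a [Xa Ha]] := chain_surj Hfps Hve Hk.
case: (Hsplit Xa) => [E|Xfa].
- by subst a; case: ne; exact (chain_fun Hfps Hve Ha0 Ha Hc).
- exact (chain_Xi Hfps Hv Xfa Ha).
Qed.

Lemma sig_J ks c : chain ks a0 c -> chain (rcons ks c) a0 (om c).
Proof. by move=> H; apply/chain_rcons; exists c; split => //; left. Qed.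

Lemma lvalidJ ks c : lvalid ks f -> chain ks a0 c -> lvalid (rcons ks c) e.
Proof.
move=> Hv Hc; apply/lvalid_rcons; split; first by case: (fe Hv).
exact (sig_in Hv Hc).
Qed.

Lemma JN ks c k : lvalid ks f -> chain ks a0 c ->
  Xi (timg c (limg ks e)) k -> k <> om c -> inJ (timg k (timg c (limg ks e))).
Proof.
move=> Hv Hc Hk ne.
set y := limg ks e.
have Xyc : Xi y c := sig_in Hv Hc.
have [k' [Xk' Hk']] := psi_surj Hfps Xyc Hk.
have nk'c : k' <> c.
  move=> E; subst k'; apply: ne.
  by apply: (psi_fun Xyc Xyc Hk'); left.
have Xfk' := moveN Hv Hc Xk' nk'c.
have [c'' Hc''] := psi_exists Hfps Xk' Xyc.
have Hck' : c.1 != k'.1 := Xi_ne Xyc Xk' (fun E => nk'c (esym E)).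
have Hcyc : forall p, F2 c k' p -> tau k (tau c p) = tau c'' (tau k' p).
  apply: (tau_cycle (j := c) (k := k') (k' := k) (j' := c'') Hfps Hck').
  - case: Hk' => [[E _]|[_ H]]; first by case: nk'c.
    apply: seteq_trans (img_seteq _ (F2C _ _)) _.
    apply: seteq_trans (seteq_sym H) (F2C _ _).
  - case: Hc'' => [[E _]|[_ H]]; first by case: nk'c.
    exact (seteq_sym H).
exists (rcons ks k'), c''; split; last split.
- by apply/lvalid_rcons.
- by apply/chain_rcons; exists c.
- rewrite limg_rcons -/y; apply: face_eq.
  have Xc'' := psi_Xi Hfps Xk' Xyc Hc''.
  apply: seteq_trans (seteq_sym (timg_spec Hfps Xc'')) _.
  apply: seteq_trans (img_seteq _ (seteq_sym (timg_spec Hfps Xk'))) _.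
  apply: seteq_trans (img_comp _ _ _) _.
  apply: seteq_trans (img_ext (t' := fun p => tau k (tau c p)) _) _.
    by move=> p Hp; rewrite Hcyc //; apply: F2_sub Xyc Xk' _ Hp.
  apply: seteq_trans (seteq_sym (img_comp _ _ _)) _.
  apply: seteq_trans (img_seteq _ (timg_spec Hfps Xyc)) _.
  exact (timg_spec Hfps Hk).
Qed.

Lemma step_ind ks : lvalid ks e -> inC (limg ks e) \/ inJ (limg ks e).
Proof.
elim/last_ind: ks => [|ks k IH].
  by move=> _; left; exists [::].
move=> /lvalid_rcons [Hv Hk]; rewrite limg_rcons.
case: (IH Hv) => [[ks' [Hv' Ex]]|[ks' [c [Hv' [Hc Ex]]]]].
- have [Hve _] := fe Hv'.
  have [c [Hc _]] := chain_ex Hfps Hve Ha0.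
  case: (eqVneq k c) => [E|ne].
  + by subst k; right; exists ks', c; rewrite Ex.
  + left; exists (rcons ks' k); split.
    * apply/lvalid_rcons; split => //; apply: moveN Hv' Hc _ _.
      - by rewrite Ex.
      - exact/eqP.
    * by rewrite limg_rcons Ex.
- case: (eqVneq k (om c)) => [E|ne].
  + left; exists ks'; split => //; subst k.
    by rewrite -Ex timg_inv //; apply: sig_in.
  + right; rewrite -Ex; apply: JN Hv' Hc _ _.
    * by rewrite Ex.
    * exact/eqP.
Qed.

Definition SC : {set label n} := [set x | asbool (inC x)].
Definition SJ : {set label n} := [set x | asbool (inJ x)].

Lemma inSC x : x \in SC <-> inC x.
Proof. rewrite inE; exact: asboolP. Qed.
Lemma inSJ x : x \in SJ <-> inJ x.
Proof. rewrite inE; exact: asboolP. Qed.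
Lemma inFam l x : x \in face_family tau l <-> exists ks, lvalid ks l /\ limg ks l = x.
Proof. rewrite inE; apply: iff_trans (asboolP _) _; exact (in_familyP Hfps l x). Qed.

Lemma K1 : face_family tau e = SC :|: SJ.
Proof.
apply/setP => x; apply/idP/idP.
- move/inFam => [ks [Hv <-]]; rewrite in_setU.
  by case: (step_ind Hv) => [/inSC ->|/inSJ ->] //; rewrite orbT.
- rewrite in_setU => /orP [/inSC [ks [Hv <-]]|/inSJ [ks [c [Hv [Hc <-]]]]]; apply/inFam.
  + by exists ks; split => //; case: (fe Hv).
  + exists (rcons ks c); split; first exact (lvalidJ Hv Hc).
    by rewrite limg_rcons.
Qed.

Lemma K2 : #|SC| = #|face_family tau f|.
Proof.
apply: (card_rel (R := fun x g => exists ks, lvalid ks f /\ limg ks e = x /\ limg ks f = g)).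
- move=> x /inSC [ks [Hv Ex]]; exists (limg ks f); split.
  + by apply/inFam; exists ks.
  + by exists ks.
- move=> g /inFam [ks [Hv Eg]]; exists (limg ks e); split.
  + by apply/inSC; exists ks.
  + by exists ks.
- move=> x g g' _ _ _ [ks1 [H1 [E1 <-]]] [ks2 [H2 [E2 <-]]].
  have [H1e _] := fe H1; have [H2e _] := fe H2.
  have Ee : limg ks1 e = limg ks2 e by rewrite E1 E2.
  apply: Xi_ext => b Xb.
  + have [a [Xa Ha]] := chain_surj Hfps H1 Xb.
    have [b' [Hb' Xb']] := chain_ex Hfps H2 Xa.
    by rewrite (strongB Hfps Hst Hpe H1e H2e Ee (Xi_mono Hef Xa) Ha Hb').
  + have [a [Xa Ha]] := chain_surj Hfps H2 Xb.
    have [b' [Hb' Xb']] := chain_ex Hfps H1 Xa.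
    by rewrite (strongB Hfps Hst Hpe H2e H1e (esym Ee) (Xi_mono Hef Xa) Ha Hb').
- move=> x x' g _ _ _ [ks1 [H1 [<- E1]]] [ks2 [H2 [<- E2]]].
  have Ef : limg ks1 f = limg ks2 f by rewrite E1 E2.
  have HA := strongA Hfps Hst Hpf H1 H2 Ef.
  have [H1e _] := fe H1; have [H2e _] := fe H2.
  apply: face_eq.
  apply: seteq_trans (seteq_sym (limg_spec Hfps H1e)) _.
  apply: seteq_trans (limg_spec Hfps H2e).
  by apply: img_ext => p Hp; apply: HA; apply: Hef.
Qed.

Lemma K3 : #|SC| = #|SJ|.
Proof.
apply: (card_rel (R := fun x y => exists ks c, lvalid ks f /\ limg ks e = x /\
                          chain ks a0 c /\ timg c x = y)).
- move=> x /inSC [ks [Hv Ex]].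
  have [Hve _] := fe Hv.
  have [c [Hc _]] := chain_ex Hfps Hve Ha0.
  exists (timg c x); split.
  + by apply/inSJ; exists ks, c; rewrite Ex.
  + by exists ks, c.
- move=> y /inSJ [ks [c [Hv [Hc Ey]]]]; exists (limg ks e); split.
  + by apply/inSC; exists ks.
  + by exists ks, c.
- move=> x y y' _ _ _ [ks1 [c1 [H1 [E1 [C1 <-]]]]] [ks2 [c2 [H2 [E2 [C2 <-]]]]].
  have [H1e _] := fe H1; have [H2e _] := fe H2.
  have Ee : limg ks1 e = limg ks2 e by rewrite E1 E2.
  by rewrite (strongB Hfps Hst Hpe H1e H2e Ee Ha0 C1 C2).
- move=> x x' y _ _ _ [ks1 [c1 [H1 [E1 [C1 Y1]]]]] [ks2 [c2 [H2 [E2 [C2 Y2]]]]].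
  have V1 := lvalidJ H1 C1; have V2 := lvalidJ H2 C2.
  have Ey : limg (rcons ks1 c1) e = limg (rcons ks2 c2) e.
    by rewrite !limg_rcons E1 E2 Y1 Y2.
  have Ec := strongB Hfps Hst Hpe V1 V2 Ey Ha0 (sig_J C1) (sig_J C2).
  have : c1 = c2 by rewrite -(om_inv Hfps c1) Ec (om_inv Hfps).
  move=> Ec'; subst c2.
  have X1 := sig_in H1 C1; have X2 := sig_in H2 C2.
  rewrite E1 in X1; rewrite E2 in X2.
  by rewrite -(timg_inv Hfps X1) -(timg_inv Hfps X2) Y1 Y2.
Qed.

Lemma sigmaJ ks s ks2 c2 : lvalid ks f -> chain ks a0 s ->
  lvalid ks2 f -> chain ks2 a0 c2 -> timg c2 (limg ks2 e) = limg ks e -> s = om c2.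
Proof.
move=> Hv Hs Hv2 Hc2 E.
have [Hve _] := fe Hv.
have V2 := lvalidJ Hv2 Hc2.
have Ey : limg ks e = limg (rcons ks2 c2) e by rewrite limg_rcons E.
exact (strongB Hfps Hst Hpe Hve V2 Ey Ha0 Hs (sig_J Hc2)).
Qed.

Lemma stepA ks : lvalid ks f -> inJ (limg ks e) -> inJ e.
Proof.
elim/last_ind: ks => [|ks k IH] //.
move=> Hv; have /lvalid_rcons [Hv1 Xk] := Hv.
move=> [ks2 [c2 [Hv2 [Hc2 Ex]]]].
have [Hve _] := fe Hv.
have [s [Hs _]] := chain_ex Hfps Hve Ha0.
have Es := sigmaJ Hv Hs Hv2 Hc2 Ex.
have Ng := sig_notg Hv Hs.
have Xok : Xi (limg (rcons ks k) f) (om k) by rewrite limg_rcons; apply: Xi_timg.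
have [_ Sub1] := fe Hv1.
have Xek : Xi (limg ks e) k := Xi_mono Sub1 Xk.
apply: IH Hv1 _.
have <- : timg (om k) (limg (rcons ks k) e) = limg ks e.
  by rewrite limg_rcons timg_inv.
rewrite -Ex; apply: JN Hv2 Hc2 _ _.
- by rewrite Ex limg_rcons; apply: Xi_timg.
- by move=> E; apply: Ng; rewrite Es -E.
Qed.

Lemma stepB ks : inJ e -> lvalid ks f -> inJ (limg ks e).
Proof.
move=> HJ; elim/last_ind: ks => [|ks k IH] //.
move=> Hv; have /lvalid_rcons [Hv1 Xk] := Hv.
have [ks2 [c2 [Hv2 [Hc2 Ex]]]] := IH Hv1.
have [Hve _] := fe Hv1.
have [s [Hs _]] := chain_ex Hfps Hve Ha0.
have Es := sigmaJ Hv1 Hs Hv2 Hc2 Ex.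
have Ng := sig_notg Hv1 Hs.
have [_ Sub1] := fe Hv1.
rewrite limg_rcons -Ex; apply: JN Hv2 Hc2 _ _.
- by rewrite Ex; apply: Xi_mono Sub1 Xk.
- by move=> E; apply: Ng; rewrite Es -E.
Qed.

Lemma K4 x : x \in SC -> x \in SJ -> SC \subset SJ.
Proof.
move=> /inSC [ks [Hv Ex]] /inSJ HJ.
have HJe : inJ e by apply: stepA Hv _; rewrite Ex.
apply/subsetP => y /inSC [ks' [Hv' <-]]; apply/inSJ; exact (stepB HJe Hv').
Qed.

Lemma main_count : #|face_family tau e| = #|face_family tau f| \/
                   #|face_family tau e| = 2 * #|face_family tau f|.
Proof.
rewrite K1 -K2.
have E3 := K3.
have := cardsU SC SJ.
case: (set_0Vmem (SC :&: SJ)) => [E0|[x]].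
- rewrite E0 cards0 subn0 -E3 => ->; right; by rewrite mul2n addnn.
- rewrite in_setI => /andP [H1 H2].
  have Hs := K4 H1 H2.
  have ESC : SC = SJ by apply/eqP; rewrite eqEcard Hs -E3 leqnn.
  move=> _; left; by rewrite -ESC setUid.
Qed.

End Main.

Lemma find_a0 n (e f : label n) : psub (face_set e) (face_set f) ->
  fdim f = (fdim e).+1 ->
  exists a0 : signed n, [/\ Xi e a0, ~ Xi f a0 &
    forall a, Xi e a -> a = a0 \/ Xi f a].
Proof.
move=> Hef Hd.
have Hs := face_sub Hef.
pose Pe := [pred i | e i == None]; pose Pf := [pred i | f i == None].
have sub : forall i, Pe i -> Pf i.
  move=> i; rewrite /= => /eqP Ei; apply/eqP; case Ef: (f i) => [b|] //.
  by rewrite (Hs _ _ Ef) in Ei.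
have [/existsP [i0 /andP [Hf0 He0]]|Hno] := boolP [exists i, Pf i && ~~ Pe i];
  last first.
  exfalso.
  have : Pf \subset Pe.
    apply/subsetP => i Hi; apply/negPn; apply/negP => Hn.
    by move/existsP: Hno; apply; exists i; apply/andP; split; [exact: Hi | exact: Hn].
  move/subset_leq_card; rewrite /fdim in Hd.
  have -> : #|Pf| = #|[pred i | f i == None]| by [].
  by rewrite Hd ltnn.
move: He0; rewrite /= ; case E0: (e i0) => [b0|] // _.
move: Hf0; rewrite /= => /eqP Hf0.
have uniq : forall i, f i = None -> e i <> None -> i = i0.
  move=> i Hfi Hei; apply/eqP; apply/negP => Hne.
  have Hsub : Pe \subset [predD1 [predD1 Pf & i0] & i].
    apply/subsetP => j Hj; rewrite !inE.
    have Pfj := sub _ Hj.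
    move: Hj; rewrite /= => /eqP Ej.
    apply/and3P; split.
    - by apply/eqP => E; subst j.
    - by apply/eqP => E; subst j; rewrite E0 in Ej.
    - exact: Pfj.
  move/subset_leq_card: Hsub.
  have C1 := cardD1 i0 Pf; have C2 := cardD1 i [predD1 Pf & i0].
  have Hi0 : i0 \in Pf by rewrite inE /= Hf0.
  have Hi : i \in [predD1 Pf & i0].
    by rewrite !inE /= Hfi eqxx andbT; apply/negP.
  rewrite Hi0 in C1; rewrite Hi in C2.
  rewrite /fdim in Hd.
  have : #|Pf| = (#|Pe|).+1 by [].
  rewrite C1 C2 !add1n => -[E] H.
  by rewrite -E ltnn in H.
exists (i0, b0); split.
- exact: E0.
- by rewrite /Xi /= Hf0.
- move=> [i b]; rewrite /Xi /= => Hei.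
  case Ef: (f i) => [b'|].
  + by right; rewrite (Hs _ _ Ef) in Hei.
  + left; have Ei : i = i0 by apply: uniq Ef _; rewrite Hei.
    by subst i; rewrite E0 in Hei; case: Hei => ->.
Qed.

Theorem mainTheorem5 (n : nat) (om : signed n -> signed n)
    (tau : signed n -> point n -> point n) (e f : label n) :
  regular om tau -> strong om tau ->
  proper_face e -> proper_face f -> psub (face_set e) (face_set f) ->
  fdim f = (fdim e).+1 ->
  #|face_family tau e| = #|face_family tau f| \/ #|face_family tau e| = 2 * #|face_family tau f|.
Proof.
move=> [Hfps _ _] Hst He Hf Hef Hd.
have [a0 [Ha0 Hna0 Hsplit]] := find_a0 Hef Hd.
exact (main_count Hfps Hst Hef Ha0 Hna0 Hsplit Hf).
Qed.
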